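(* Let $T$ be an unmixed tree. Then the stable complex $\mathcal{S}(T)$ is shellable.
   Context: For a finite simple graph $G=(V,E)$, $N(v)=\{u: uv\in E\}$ and $N(D)=\bigcup_{v\in D}N(v)$. A set $D\subseteq V$ is a total dominating set (TD-set) if $N(D)=V$, and a minimal TD-set if no proper subset is a TD-set. $G$ is unmixed if all minimal TD-sets of $G$ have the same size. The stable complex $\mathcal{S}(G)$ is the simplicial complex on $V$ whose facets are the sets $V\setminus D$ with $D$ a minimal TD-set of $G$. A pure simplicial complex is shellable if its facets admit an ordering $F_1,\dots,F_m$ such that for all $1\le i<j\le m$ there exist $v\in F_j\setminus F_i$ and $k<j$ with $F_j\setminus F_k=\{v\}$. *)

(* Defs.v *)
From mathcomp Require Import all_boot.
Set Implicit Arguments. Unset Strict Implicit. Unset Printing Implicit Defensive.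

Definition simple_graph (T : finType) (e : rel T) : Prop :=
  symmetric e /\ irreflexive e.

Definition nbhd (T : finType) (e : rel T) (v : T) : {set T} := [set u | e v u].
Definition nbhdS (T : finType) (e : rel T) (D : {set T}) : {set T} :=
  \bigcup_(v in D) nbhd e v.

Definition is_TDset (T : finType) (e : rel T) (D : {set T}) : bool :=
  nbhdS e D == [set: T].

Definition is_minTDset (T : finType) (e : rel T) (D : {set T}) : bool :=
  is_TDset e D && [forall D' : {set T}, (D' \proper D) ==> ~~ is_TDset e D'].

Definition unmixed (T : finType) (e : rel T) : Prop :=
  forall D1 D2 : {set T}, is_minTDset e D1 -> is_minTDset e D2 -> #|D1| = #|D2|.

(* Tree: a connected graph with exactly |V| - 1 edges (edges counted as
   unordered pairs, i.e. ordered adjacent pairs counted twice). *)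
Definition is_tree (T : finType) (e : rel T) : Prop :=
  simple_graph e /\ 0 < #|T| /\
  (forall x y : T, connect e x y) /\
  #|[set p : T * T | e p.1 p.2]| = 2 * (#|T| - 1).

(* Facets of the stable complex S(G): complements of minimal TD-sets. *)
Definition stable_facet (T : finType) (e : rel T) (F : {set T}) : bool :=
  is_minTDset e (~: F).

Definition pure_facets (T : finType) (facet : pred {set T}) : Prop :=
  forall F G : {set T}, facet F -> facet G -> #|F| = #|G|.

Definition shelling (T : finType) (s : seq {set T}) : Prop :=
  forall i j : nat, i < j -> j < size s ->
    exists v : T, v \in nth set0 s j :\: nth set0 s i /\
      exists2 k : nat, k < j & nth set0 s j :\: nth set0 s k = [set v].

Definition shellable (T : finType) (facet : pred {set T}) : Prop :=
  pure_facets facet /\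
  exists s : seq {set T}, [/\ uniq s, (forall F, (F \in s) = facet F) & shelling s].

(* Main.v *)
Require Import Defs.
From mathcomp Require Import all_boot zify.
Set Implicit Arguments. Unset Strict Implicit. Unset Printing Implicit Defensive.

Definition inside (T : finType) (e : rel T) (S : {set T}) : {set T * T} :=
  [set p | [&& e p.1 p.2, p.1 \in S & p.2 \in S]].

Lemma crossing (T : finType) (e : rel T) : symmetric e ->
  (forall x y : T, connect e x y) -> forall S : {set T},
  S != set0 -> S != setT -> exists x y, [/\ y \in S, x \notin S & e y x].
Proof.
move=> esym conn S /set0Pn[s sS] /eqP nT.
have [t tS] : exists t, t \notin S.
  case: (pickP (fun t => t \notin S)) => [t ? | H]; first by exists t.
  by case: nT; apply/setP => x; rewrite inE; move: (H x) => /negbFE.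
case: (pickP (fun p : T * T => [&& p.2 \in S, p.1 \notin S & e p.2 p.1])).
  by move=> [x y] /and3P[? ? ?]; exists x, y.
move=> H.
have cl : closed e S.
  apply: intro_closed; first exact: sym_connect_sym.
  move=> x y exy xS; apply/negPn/negP => yS.
  by move: (H (y, x)); rewrite /= xS yS exy.
by move: tS; rewrite -(closed_connect cl (conn s t)) sS.
Qed.

Lemma inside_grow (T : finType) (e : rel T) : symmetric e ->
  (forall x y : T, connect e x y) -> forall k (S : {set T}),
  #|~: S| = k -> S != set0 ->
  #|inside e S| + 2 * k <= #|[set p : T * T | e p.1 p.2]|.
Proof.
move=> esym conn; elim=> [|k IH] S hk Sn0.
  rewrite muln0 addn0; apply: subset_leq_card; apply/subsetP => p.
  by rewrite !inE => /and3P[].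
have ST : S != setT.
  by apply/eqP => ST; move: hk; rewrite ST setCT cards0.
have [x [y [yS xS exy]]] := crossing esym conn Sn0 ST.
have hk' : #|~: (x |: S)| = k.
  have : #|~: S| = #|~: (x |: S)| + 1.
    have -> : ~: S = x |: ~: (x |: S).
      by apply/setP => z; rewrite !inE; case: eqP => [->|].
    by rewrite cardsU1 !inE eqxx /= addnC.
  by rewrite hk addn1 => -[].
have := IH (x |: S) hk' (introT (set0Pn _) (ex_intro _ x (setU11 x S))).
apply: leq_trans; rewrite mulnS addnA leq_add2r.
have sub : (x, y) |: ((y, x) |: inside e S) \subset inside e (x |: S).
  apply/subsetP => p; rewrite !inE => /or3P[/eqP-> | /eqP-> | /and3P[-> -> ->]].
  - by rewrite /= esym exy eqxx yS orbT.
  - by rewrite /= exy eqxx yS orbT.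
  - by rewrite !orbT.
apply: leq_trans (subset_leq_card sub).
rewrite cardsU1 cardsU1 !inE /= (negbTE xS) !andbF.
have -> : ((x, y) == (y, x)) = false.
  by apply/negbTE; apply: contra xS => /eqP[->].
by rewrite addnA addnC.
Qed.

Lemma inside_card (T : finType) (e : rel T) (S : {set T}) :
  #|inside e S| = \sum_(s in S) #|[set y in S | e s y]|.
Proof.
rewrite (eq_bigr (fun s => \sum_(y | (y \in S) && e s y) 1)); last first.
  by move=> s _; rewrite sum1_card; apply: eq_card => y; rewrite inE.
rewrite pair_big_dep /= -sum1_card; apply: eq_bigl => p.
by rewrite inE; case: p => a b /=; rewrite andbC andbA.
Qed.

Lemma tree_degenerate (T : finType) (e : rel T) : is_tree e ->
  forall S : {set T}, S != set0 ->
  exists2 s, s \in S & #|[set y in S | e s y]| <= 1.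
Proof.
move=> [[esym eirr] [n0 [conn cnt]]] S Sn0.
case: (pickP (fun s => (s \in S) && (#|[set y in S | e s y]| <= 1))).
  by move=> s /andP[? ?]; exists s.
move=> H; exfalso.
have big : 2 * #|S| <= #|inside e S|.
  rewrite inside_card mulnC -sum_nat_const; apply: leq_sum => s sS.
  by move: (H s); rewrite sS /= => /negbT; rewrite -ltnNge.
have := inside_grow esym conn (erefl _) Sn0.
rewrite cnt => le.
have := leq_trans (leq_add big (leqnn _)) le.
rewrite -mulnDr cardsC; case: #|T| n0 => // m _.
by rewrite subSS subn0 leq_pmul2l // ltnn.
Qed.

Definition indep (T : finType) (e : rel T) (W U : {set T}) : pred {set T} :=
  fun F => (F \subset W) && [forall u in U, [exists y, [&& e u y, y \in W & y \notin F]]].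

Definition fam (T : finType) (e : rel T) (W U : {set T}) := maxset (indep e W U).

Lemma indep_link (T : finType) (e : rel T) (W U F : {set T}) v :
  v \in W -> v \in F -> indep e W U F = indep e (W :\ v) U (F :\ v).
Proof.
move=> vW vF; rewrite /indep; congr andb.
  apply/subsetP/subsetP => H x.
    by rewrite !inE => /andP[-> /H ->].
  by case: (eqVneq x v) => [-> //|xv xF]; have := H x; rewrite !inE xv xF => /(_ isT) /andP[].
apply: eq_forallb => u; congr implb; apply: eq_existsb => y.
rewrite !inE; case: (eqVneq y v) => [->|//]; by rewrite vF !andbF.
Qed.

Lemma fam_link (T : finType) (e : rel T) (W U F : {set T}) v :
  v \in W -> v \in F -> fam e W U F = fam e (W :\ v) U (F :\ v).
Proof.
move=> vW vF; apply/maxsetP/maxsetP => [[PF maxF]|[QF maxF]].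
  split; first by rewrite -indep_link.
  move=> B QB sFB.
  have vB : v \notin B by case/andP: QB => /subsetP sB _; apply/negP => /sB; rewrite !inE eqxx.
  have vvB : v \in v |: B by rewrite setU11.
  have PvB : indep e W U (v |: B) by rewrite (indep_link _ _ vW vvB) setU1K.
  have : F \subset v |: B.
    apply/subsetP => x xF; rewrite !inE; case: (eqVneq x v) => //= xv.
    by apply: (subsetP sFB); rewrite !inE xv xF.
  by move=> /(maxF _ PvB) <-; rewrite setU1K.
split; first by rewrite (indep_link _ _ vW vF).
move=> B PB sFB.
have vB : v \in B by apply: (subsetP sFB).
have : B :\ v = F :\ v.
  apply: maxF; first by rewrite -indep_link.
  by apply: setSD.
by move=> h; rewrite -(setD1K vB) h setD1K.
Qed.

Lemma indep_del (T : finType) (e : rel T) (W U F : {set T}) v :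
  v \in W -> v \notin F ->
  indep e W U F = indep e (W :\ v) [set u in U | ~~ e u v] F.
Proof.
move=> vW vF; rewrite /indep; congr andb.
  apply/idP/idP => /subsetP H; apply/subsetP => x xF.
    by rewrite !inE H // andbT; apply: contraNneq vF => <-.
  by have := H x xF; rewrite inE => /andP[].
apply/forallP/forallP => H u.
  rewrite inE; apply/implyP => /andP[uU nuv].
  have := H u; rewrite uU /= => /existsP[y /and3P[uy yW yF]].
  apply/existsP; exists y; rewrite !inE uy yW yF andbT /=.
  by rewrite andbT; apply: (contraNneq _ nuv) => <-.
apply/implyP => uU.
case: (boolP (e u v)) => uv.
  by apply/existsP; exists v; rewrite uv vW vF.
have := H u; rewrite !inE uU uv /= => /existsP[y /and3P[uy yW' yF]].
move: yW'; rewrite !inE => /andP[_ yW].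
by apply/existsP; exists y; rewrite uy yW yF.
Qed.

Lemma fam_cone (T : finType) (e : rel T) (W U F : {set T}) v :
  v \in W -> (forall u, u \in U -> ~~ e u v) -> v \notin F -> fam e W U F = false.
Proof.
move=> vW cone vF; apply/negP => /maxsetP[PF maxF].
have PvF : indep e W U (v |: F).
  case/andP: PF => sFW /forallP H; apply/andP; split.
    by apply/subsetP => x; rewrite !inE => /orP[/eqP->//|]; apply: (subsetP sFW).
  apply/forallP => u; apply/implyP => uU.
  have := H u; rewrite uU => /existsP[y /and3P[uy yW yF]].
  apply/existsP; exists y; rewrite uy yW !inE negb_or yF !andbT /=.
  by apply: (contraNneq _ (cone u uU)) => <-.
have := maxF _ PvF (subsetUr _ _) => h.
by move: vF; rewrite -h setU11.
Qed.

Definition shed (T : finType) (e : rel T) (W U : {set T}) v u0 :=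
  [/\ v \in W, u0 \in U, e u0 v &
      forall x u, x \in W -> x != v -> e u0 x -> u \in U -> e u x -> u = u0].

Lemma shed_step (T : finType) (e : rel T) (W U B : {set T}) v u0 :
  shed e W U v u0 -> indep e W U B -> v \in B ->
  exists2 x, x \notin B & indep e W U (x |: (B :\ v)).
Proof.
move=> [vW u0U u0v leaf] /andP[sBW /forallP H] vB.
have := H u0; rewrite u0U => /existsP[x /and3P[u0x xW xB]].
exists x => //.
have xv : x != v by apply: contraNneq xB => ->.
apply/andP; split.
  apply/subsetP => z; rewrite !inE => /orP[/eqP->//|/andP[_ zB]].
  exact: (subsetP sBW).
apply/forallP => u; apply/implyP => uU.
have := H u; rewrite uU => /existsP[y /and3P[uy yW yB]].
case: (eqVneq y x) => [yx|yx].
  have uu0 : u = u0 by apply: (leaf x) => //; rewrite -yx.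
  apply/existsP; exists v; rewrite uu0 u0v vW /= !inE negb_or eqxx /= andbT.
  by rewrite eq_sym.
apply/existsP; exists y; rewrite uy yW !inE (negbTE yx) /= negb_and yB orbT.
by [].
Qed.

Lemma fam_del (T : finType) (e : rel T) (W U F : {set T}) v u0 :
  shed e W U v u0 -> v \notin F ->
  fam e W U F = fam e (W :\ v) [set u in U | ~~ e u v] F.
Proof.
move=> sh vF; have vW : v \in W by case: sh.
apply/maxsetP/maxsetP => [[PF maxF]|[RF maxF]].
  split; first by rewrite -indep_del.
  move=> B RB sFB.
  have vB : v \notin B by case/andP: RB => /subsetP sB _; apply/negP => /sB; rewrite !inE eqxx.
  by apply: maxF => //; rewrite (indep_del _ _ vW vB).
split; first by rewrite (indep_del _ _ vW vF).
move=> B PB sFB.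
case: (boolP (v \in B)) => vB; last by apply: maxF => //; rewrite -indep_del.
have [x xB Px] := shed_step sh PB vB.
have vx : v \notin x |: B :\ v.
  by rewrite !inE negb_or eqxx /= andbT; apply: (contraNneq _ xB) => <-.
have sF : F \subset x |: B :\ v.
  apply/subsetP => z zF; rewrite !inE (subsetP sFB) // andbT orbC.
  by apply/orP; left; apply: (contraNneq _ vF) => <-.
have RB : indep e (W :\ v) [set u in U | ~~ e u v] (x |: B :\ v).
  by rewrite -(indep_del _ _ vW vx).
have h := maxF _ RB sF.
by move: xB; rewrite (subsetP sFB) // -h !inE eqxx.
Qed.

Lemma fam_cover (T : finType) (e : rel T) (W U G : {set T}) v u0 :
  shed e W U v u0 -> fam e (W :\ v) U G ->
  exists2 F, fam e (W :\ v) [set u in U | ~~ e u v] F & G \subset F.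
Proof.
move=> sh famG; have vW : v \in W by case: sh.
have vG : v \notin G.
  by case/maxsetP: famG => /andP[/subsetP sG _] _; apply/negP => /sG; rewrite !inE eqxx.
have vvG : v \in v |: G by rewrite setU11.
have famF : fam e W U (v |: G) by rewrite (fam_link _ _ vW vvG) setU1K.
have [x xF Px] := shed_step sh (maxsetp famF) vvG.
rewrite setU1K // in Px.
have [F' famF' sF'] := maxset_exists Px.
have vF' : v \notin F'.
  apply/negP => vF'.
  have sub : v |: G \subset F'.
    apply/subsetP => z; rewrite !inE => /orP[/eqP->//|zG].
    by apply: (subsetP sF'); rewrite inE zG orbT.
  have := maxsetsup famF (maxsetp famF') sub => h.
  by move: xF; rewrite -h (subsetP sF') // setU11.
exists F'; first by rewrite -(fam_del sh vF').
by apply/subsetP => z zG; apply: (subsetP sF'); rewrite inE zG orbT.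
Qed.

Lemma two_le (T : finType) (Y : {set T}) x y :
  x \in Y -> y \in Y -> x != y -> 1 < #|Y|.
Proof.
move=> xY yY xy; have : [set x; y] \subset Y.
  by apply/subsetP => z; rewrite !inE => /orP[]/eqP->.
by move/subset_leq_card; apply: leq_trans; rewrite cards2 xy.
Qed.

Lemma pick_v (T : finType) (e : rel T) (W U : {set T}) : is_tree e ->
  W != set0 ->
  (exists2 v, v \in W & forall u, u \in U -> ~~ e u v) \/
  (exists v u0, shed e W U v u0).
Proof.
move=> tr Wn0; have esym : symmetric e by case: tr => [[]].
case: (pickP (fun v => (v \in W) && [forall u in U, ~~ e u v])).
  move=> v /andP[vW /forallP H]; left; exists v => // u uU.
  by have := H u; rewrite uU.
move=> Hc; right.
have nb : forall x, x \in W -> 0 < #|[set u in U | e u x]|.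
  move=> x xW; have := Hc x; rewrite xW /= => /negbT /forallPn [u].
  rewrite negb_imply negbK => /andP[uU ux].
  by apply/card_gt0P; exists u; rewrite inE uU ux.
pose A := [set x in W | #|[set u in U | e u x]| != 1].
case: (set_0Vmem A) => [A0 | [a aA]].
  have [v vW] := set0Pn _ Wn0.
  have [u0 u0in] := card_gt0P (nb v vW).
  move: u0in; rewrite inE => /andP[u0U u0v].
  exists v, u0; split=> // x u xW xv u0x uU ux.
  have : x \notin A by rewrite A0 inE.
  rewrite inE xW /= negbK => /cards1P[w hw].
  have : u \in [set w] by rewrite -hw inE uU ux.
  have : u0 \in [set w] by rewrite -hw inE u0U u0x.
  by rewrite !inE => /eqP-> /eqP->.
pose C := [set u in U | [exists a in A, e u a]].
have Sn0 : A :|: C != set0 by apply/set0Pn; exists a; rewrite inE aA.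
have [s sS sdeg] := tree_degenerate tr Sn0.
case: (boolP (s \in A)) => sA.
  exfalso; move: sA; rewrite inE => /andP[sW s1].
  have s2 : 1 < #|[set u in U | e u s]|.
    by move: (nb s sW) s1; case: #|_| => [|[|]].
  have : [set u in U | e u s] \subset [set y in A :|: C | e s y].
    apply/subsetP => u; rewrite !inE => /andP[uU us].
    rewrite esym us andbT; apply/orP; right; rewrite uU /=.
    by apply/existsP; exists s; rewrite us andbT inE sW s1.
  move/subset_leq_card => h; have := leq_trans s2 (leq_trans h sdeg).
  by rewrite ltnn.
have sC : s \in C by move: sS; rewrite inE (negbTE sA).
move: sC; rewrite inE => /andP[sU /existsP[v /andP[vA sv]]].
have vW : v \in W by move: vA; rewrite inE => /andP[].
exists v, s; split=> // x u xW xv sx uU ux.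
case: (boolP (x \in A)) => xA.
  exfalso.
  have xS : x \in [set y in A :|: C | e s y] by rewrite in_set in_setU xA sx.
  have vS : v \in [set y in A :|: C | e s y] by rewrite in_set in_setU vA sv.
  have h := two_le xS vS xv.
  by have := leq_trans h sdeg; rewrite ltnn.
move: xA; rewrite inE xW /= negbK => /cards1P[w hw].
have : u \in [set w] by rewrite -hw inE uU ux.
have : s \in [set w] by rewrite -hw inE sU sx.
by rewrite !inE => /eqP-> /eqP->.
Qed.

Lemma setU1D (T : finType) (v : T) (A B : {set T}) :
  v \notin A -> (v |: A) :\: (v |: B) = A :\: B.
Proof.
move=> vA; apply/setP => z; rewrite !inE negb_or.
by case: (eqVneq z v) => [->|]; rewrite ?(negbTE vA) ?andbF.
Qed.

Lemma shell_comb (T : finType) (v : T) (s1 s2 : seq {set T}) :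
  shelling s1 -> shelling s2 -> (forall G, G \in s2 -> v \notin G) ->
  (forall F, F \in s1 -> v \notin F) ->
  (0 < size s1 -> forall G, G \in s2 -> exists2 F, F \in s1 & G \subset F) ->
  shelling (s1 ++ map (fun G => v |: G) s2).
Proof.
move=> sh1 sh2 n2 n1 cov i j ij; rewrite size_cat size_map => jlt.
rewrite !nth_cat.
case: (ltnP j (size s1)) => js1.
  have is1 : i < size s1 by apply: ltn_trans js1.
  rewrite is1.
  have [w [wD [k kj hk]]] := sh1 i j ij js1.
  exists w; split => //; exists k => //.
  by rewrite nth_cat (ltn_trans kj js1).
have j's : j - size s1 < size s2 by lia.
rewrite (nth_map set0) //.
set Gj := nth set0 s2 (j - size s1).
have Gjin : Gj \in s2 by apply: mem_nth.
case: (ltnP i (size s1)) => is1.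
  have Fin : nth set0 s1 i \in s1 by apply: mem_nth.
  exists v; split.
    by rewrite !inE eqxx /= (n1 _ Fin).
  have [F Fs1 sGF] := cov (leq_ltn_trans (leq0n _) is1) Gj Gjin.
  exists (index F s1); first by apply: leq_trans js1; rewrite index_mem.
  rewrite nth_cat index_mem Fs1 nth_index //.
  apply/setP => z; rewrite !inE.
  case: (eqVneq z v) => [->|zv] /=; first by rewrite (n1 _ Fs1).
  by case: (boolP (z \in Gj)) => zG; rewrite ?andbF // (subsetP sGF z zG).
rewrite (nth_map set0); last by lia.
rewrite setU1D ?n2 //.
have [w [wD [k kj hk]]] := sh2 (i - size s1) (j - size s1) ltac:(lia) j's.
exists w; split => //; exists (k + size s1); first by lia.
rewrite nth_cat ltnNge leq_addl /= addnK (nth_map set0); last by lia.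
by rewrite setU1D ?n2 // mem_nth.
Qed.

Lemma mem_map_setU1 (T : finType) (v : T) (s2 : seq {set T}) F :
  (forall G, G \in s2 -> v \notin G) ->
  (F \in map (fun G => v |: G) s2) = (v \in F) && (F :\ v \in s2).
Proof.
move=> n2; apply/mapP/andP => [[G Gin ->]|[vF Fin]].
  by rewrite setU11 setU1K ?n2.
by exists (F :\ v); rewrite ?setD1K.
Qed.

Lemma fam_notin (T : finType) (e : rel T) (W U F : {set T}) v :
  fam e (W :\ v) U F -> v \notin F.
Proof.
by case/maxsetP => /andP[/subsetP sF _] _; apply/negP => /sF; rewrite !inE eqxx.
Qed.

Lemma uniq_map_setU1 (T : finType) (v : T) (s2 : seq {set T}) :
  (forall G, G \in s2 -> v \notin G) -> uniq s2 -> uniq (map (fun G => v |: G) s2).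
Proof.
move=> n2 u2; rewrite map_inj_in_uniq // => G1 G2 G1in G2in h.
by rewrite -(setU1K (n2 _ G1in)) h setU1K ?n2.
Qed.

Lemma main_ind (T : finType) (e : rel T) : is_tree e ->
  forall n (W U : {set T}), #|W| = n ->
  exists s, [/\ uniq s, forall F, (F \in s) = fam e W U F & shelling s].
Proof.
move=> tr; elim=> [|n IH] W U hW.
  have W0 : W = set0 by apply/eqP; rewrite -cards_eq0 hW.
  exists [seq F <- [:: set0] | fam e W U F]; split.
  - by rewrite filter_uniq.
  - move=> F; rewrite mem_filter; case: (boolP (fam e W U F)) => //= fF.
    rewrite inE; case/maxsetP: fF => /andP[sF _] _.
    by rewrite -subset0 -W0.
  - move=> i j ij jlt; exfalso; move: jlt; rewrite /=.
    by case: (fam e W U set0) => /=; case: j ij => // j _; rewrite ltnS ltn0.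
have Wn0 : W != set0 by rewrite -card_gt0 hW.
have hWv : forall v, v \in W -> #|W :\ v| = n.
  by move=> v vW; move: hW; rewrite (cardsD1 v) vW add1n => -[].
case: (pick_v U tr Wn0) => [[v vW cone] | [v [u0 sh]]].
  have [s2 [u2 m2 sh2]] := IH (W :\ v) U (hWv v vW).
  have n2 : forall G, G \in s2 -> v \notin G by move=> G; rewrite m2; apply: fam_notin.
  exists ([::] ++ map (fun G => v |: G) s2); split.
  - by rewrite cat0s uniq_map_setU1.
  - move=> F; rewrite cat0s mem_map_setU1 // m2.
    case: (boolP (v \in F)) => vF /=; first by rewrite -fam_link.
    by rewrite (fam_cone vW cone vF).
  - apply: shell_comb => //; by move=> i j ij; rewrite ltn0.
have vW : v \in W by case: sh.
have [s2 [u2 m2 sh2]] := IH (W :\ v) U (hWv v vW).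
have [s1 [u1 m1 sh1]] := IH (W :\ v) [set u in U | ~~ e u v] (hWv v vW).
have n2 : forall G, G \in s2 -> v \notin G by move=> G; rewrite m2; apply: fam_notin.
have n1 : forall G, G \in s1 -> v \notin G by move=> G; rewrite m1; apply: fam_notin.
exists (s1 ++ map (fun G => v |: G) s2); split.
- rewrite cat_uniq u1 uniq_map_setU1 // andbT.
  apply/hasPn => F; rewrite mem_map_setU1 // => /andP[vF _].
  by apply/negP => Fs1; have := n1 _ Fs1; rewrite vF.
- move=> F; rewrite mem_cat mem_map_setU1 // m2.
  case: (boolP (v \in F)) => vF /=.
    rewrite -fam_link // orbC.
    case: (boolP (F \in s1)) => Fs1; last by rewrite orbF.
    by have := n1 _ Fs1; rewrite vF.
  by rewrite orbF m1 (fam_del sh vF).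
- apply: shell_comb => // _ G; rewrite m2 => fG.
  have [F fF sGF] := fam_cover sh fG.
  by exists F; rewrite ?m1.
Qed.

Lemma TD_indep (T : finType) (e : rel T) (D : {set T}) : symmetric e ->
  is_TDset e D = indep e setT setT (~: D).
Proof.
move=> esym; rewrite /is_TDset /indep subsetT /=.
apply/eqP/forallP => [H u | H].
  have : u \in nbhdS e D by rewrite H inE.
  case/bigcupP => v vD; rewrite inE => vu.
  by apply/implyP => _; apply/existsP; exists v; rewrite -esym vu !inE vD.
apply/setP => u; rewrite inE; have := H u; rewrite inE /= => /existsP[v].
rewrite !inE negbK => /andP[uv vD].
by apply/bigcupP; exists v; rewrite // inE -esym.
Qed.

Lemma facet_fam (T : finType) (e : rel T) (F : {set T}) : symmetric e ->
  stable_facet e F = fam e setT setT F.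
Proof.
move=> esym; rewrite /stable_facet /is_minTDset.
apply/andP/maxsetP => [[TD /forallP H]|[PF maxF]].
  split; first by rewrite -(setCK F) -TD_indep.
  move=> B PB sFB; apply/eqP; apply: contraT => BF.
  have := H (~: B); rewrite properE !setCS sFB /=.
  have -> : ~~ (B \subset F).
    by apply: contra BF => sBF; rewrite eqEsubset sBF.
  by rewrite TD_indep // setCK PB.
split; first by rewrite TD_indep // setCK.
apply/forallP => D; apply/implyP => pD; apply/negP => TDD.
have PB : indep e setT setT (~: D) by rewrite -TD_indep.
have sFD : F \subset ~: D by rewrite -[F]setCK setCS (proper_sub pD).
have h := maxF _ PB sFD.
by move: pD; rewrite -h setCK properxx.
Qed.

Unset Implicit Arguments.

Theorem theorem4p25 (T : finType) (e : rel T) :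
  is_tree e -> unmixed e -> shellable (stable_facet e).
Proof.
move=> tr um; have esym : symmetric e by case: tr => [[]].
split.
  move=> F G fF fG; rewrite (cardsCs F) (cardsCs G).
  by rewrite (um _ _ fF fG).
have [s [us ms shs]] := @main_ind T e tr _ [set: T] [set: T] (erefl _).
exists s; split => // F; by rewrite ms facet_fam.
Qed.
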